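(* For any $n$-agent rank-based mechanism with allocation rule $x$ and any $\delta<1/n$: (1) $\sup_{q<\delta}x'(q)\le e\,x'(\delta)$, and (2) $\sup_{q>1-\delta}x'(q)\le e\,x'(1-\delta)$.
   Context: For $k\in\{1,\dots,n-1\}$ the $k$-highest-bids-win allocation rule in quantile space is $x_k(q)=\sum_{i=0}^{k-1}\binom{n-1}{i}q^{n-1-i}(1-q)^i$, with derivative $x_k'(q)=(n-1)\binom{n-2}{k-1}q^{n-k-1}(1-q)^{k-1}$; $x_0\equiv 0$, $x_n\equiv 1$. A rank-based mechanism with position weights $1\ge w_1\ge\cdots\ge w_n\ge 0$ ($w_{n+1}:=0$) has allocation rule $x(q)=\sum_{k=1}^{n}(w_k-w_{k+1})x_k(q)$, $q\in[0,1]$. *)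

(* Defs.v *)
From Stdlib Require Import Reals.
Open Scope R_scope.

(* k-highest-bids-win allocation rule in quantile space, n agents:
   x_0 = 0, x_n = 1, and for 1 <= k <= n-1
   x_k(q) = sum_{i=0}^{k-1} C(n-1,i) q^(n-1-i) (1-q)^i. *)
Definition xk (n k : nat) (q : R) : R :=
  if Nat.eqb k 0 then 0
  else if Nat.eqb k n then 1
  else sum_f_R0 (fun i => C (n - 1) i * q ^ (n - 1 - i) * (1 - q) ^ i) (k - 1).

Definition xk' (n k : nat) (q : R) : R :=
  if Nat.eqb k 0 then 0
  else if Nat.eqb k n then 0
  else INR (n - 1) * C (n - 2) (k - 1) * q ^ (n - k - 1) * (1 - q) ^ (k - 1).

Definition wext (n : nat) (w : nat -> R) (k : nat) : R :=
  if Nat.ltb n k then 0 else w k.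

(* Rank-based mechanism allocation rule x(q) = sum_{k=1}^n (w_k - w_{k+1}) x_k(q). *)
Definition alloc (n : nat) (w : nat -> R) (q : R) : R :=
  sum_f_R0 (fun j => (wext n w (S j) - wext n w (S (S j))) * xk n (S j) q) (n - 1).

Definition alloc' (n : nat) (w : nat -> R) (q : R) : R :=
  sum_f_R0 (fun j => (wext n w (S j) - wext n w (S (S j))) * xk' n (S j) q) (n - 1).

Definition valid_weights (n : nat) (w : nat -> R) : Prop :=
  w 1%nat <= 1 /\
  (forall k : nat, (1 <= k)%nat -> (k < n)%nat -> w (S k) <= w k) /\
  0 <= w n.

(* Main.v *)
Require Import Defs.
From Stdlib Require Import Reals Lra Lia.
Open Scope R_scope.

Lemma pow_exp_aux (t y : R) (b : nat) : 0 < t -> 1 <= t * exp y ->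
  1 <= t ^ b * exp (INR b * y).
Proof.
  intros Ht H. induction b as [|b IH].
  - simpl. rewrite Rmult_0_l, exp_0. lra.
  - rewrite S_INR, Rmult_plus_distr_r, Rmult_1_l, exp_plus. simpl.
    replace (t * t ^ b * (exp (INR b * y) * exp y)) with
      ((t * exp y) * (t ^ b * exp (INR b * y))) by ring.
    assert (0 <= t ^ b * exp (INR b * y)) by lra.
    nra.
Qed.

Lemma exp_le (a b : R) : a <= b -> exp a <= exp b.
Proof.
  intros H. destruct (Rle_lt_or_eq_dec _ _ H) as [H'|H'].
  - left. now apply exp_increasing.
  - subst. lra.
Qed.

Lemma key_pow (d : R) (b : nat) : 0 < d -> INR (S b) * d < 1 ->
  1 <= exp 1 * (1 - d) ^ b.
Proof.
  intros Hd Hb. rewrite S_INR in Hb.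
  assert (Hb0 := pos_INR b).
  assert (Ht : 0 < 1 - d) by nra.
  set (y := d / (1 - d)).
  assert (H1 : 1 <= (1 - d) * exp y).
  { assert (H := exp_ineq1_le y).
    assert (E : (1 - d) * (1 + y) = 1) by (unfold y; field; lra).
    assert (0 <= 1 - d) by lra. nra. }
  assert (H2 := pow_exp_aux (1-d) y b Ht H1).
  assert (H3 : exp (INR b * y) <= exp 1).
  { apply exp_le. unfold y.
    replace (INR b * (d / (1 - d))) with ((INR b * d) / (1 - d)) by (field; lra).
    apply Rmult_le_reg_r with (1 - d); [lra|].
    unfold Rdiv. rewrite Rmult_assoc, Rinv_l by lra. nra. }
  assert (0 <= (1 - d) ^ b) by (apply pow_le; lra).
  nra.
Qed.

Lemma C_nonneg (m k : nat) : 0 <= C m k.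
Proof.
  unfold C. apply Rmult_le_pos; [apply pos_INR|].
  apply Rlt_le, Rinv_0_lt_compat, Rmult_lt_0_compat; apply lt_0_INR, Factorial.lt_O_fact.
Qed.

Lemma coef_nonneg n w j : valid_weights n w -> (j <= n - 1)%nat -> (1 <= n)%nat ->
  0 <= wext n w (S j) - wext n w (S (S j)).
Proof.
  intros [_ [Hm Hn]] Hj Hn1. unfold wext.
  destruct (Nat.ltb_spec n (S j)); [lia|].
  destruct (Nat.ltb_spec n (S (S j))).
  - assert (S j = n) by lia. subst. lra.
  - assert (w (S (S j)) <= w (S j)) by (apply Hm; lia). lra.
Qed.


Lemma bnd_d n d m : (1 <= n)%nat -> 0 < d -> d < 1 / INR n -> (S m < n)%nat ->
  1 <= exp 1 * (1 - d) ^ m.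
Proof.
  intros Hn Hd Hdn Hm. apply key_pow; auto.
  assert (Hn0 : 0 < INR n) by (apply lt_0_INR; lia).
  assert (HI : INR (S m) < INR n) by (apply lt_INR; lia).
  assert (INR n * d < 1).
  { apply Rmult_lt_compat_l with (r := INR n) in Hdn; auto.
    unfold Rdiv in Hdn. rewrite Rmult_1_l, Rinv_r in Hdn by lra. lra. }
  nra.
Qed.

Lemma term1 n k q d : (1 <= n)%nat -> (k <= n)%nat -> 0 < d -> d < 1 / INR n -> 0 <= q -> q < d ->
  xk' n k q <= exp 1 * xk' n k d.
Proof.
  intros Hn Hkn Hd Hdn Hq Hqd. unfold xk'.
  destruct (Nat.eqb_spec k 0); [lra|].
  destruct (Nat.eqb_spec k n); [lra|].
  set (K := INR (n - 1) * C (n - 2) (k - 1)).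
  assert (HK : 0 <= K) by (apply Rmult_le_pos; [apply pos_INR|apply C_nonneg]).
  assert (Ha : q ^ (n - k - 1) <= d ^ (n - k - 1)) by (apply pow_incr; lra).
  assert (Hqa : 0 <= q ^ (n - k - 1)) by (apply pow_le; lra).
  assert (Hd1 : d < 1).
  { assert (1 <= INR n) by (apply (le_INR 1); lia).
    assert (1 / INR n <= 1).
    { unfold Rdiv. rewrite Rmult_1_l. rewrite <- Rinv_1. apply Rinv_le_contravar; lra. }
    lra. }
  assert (Hb : (1 - q) ^ (k - 1) <= 1).
  { apply Rle_trans with (1 ^ (k-1)); [apply pow_incr; lra | rewrite pow1; lra]. }
  assert (Hb0 : 0 <= (1 - q) ^ (k - 1)) by (apply pow_le; lra).
  assert (He := bnd_d n d (k - 1) Hn Hd Hdn ltac:(lia)).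
  assert (0 <= K * q ^ (n - k - 1)) by (apply Rmult_le_pos; auto).
  assert (K * q ^ (n - k - 1) <= K * d ^ (n - k - 1)) by (apply Rmult_le_compat_l; auto).
  assert (0 <= K * d ^ (n - k - 1)) by lra.
  apply Rle_trans with (K * q ^ (n - k - 1) * 1).
  { apply Rmult_le_compat_l; auto. }
  apply Rle_trans with (K * d ^ (n - k - 1) * (exp 1 * (1 - d) ^ (k - 1))).
  { apply Rle_trans with (K * d ^ (n - k - 1) * 1). rewrite !Rmult_1_r; assumption.
    apply Rmult_le_compat_l; auto. }
  lra.
Qed.

Lemma term2 n k q d : (1 <= n)%nat -> (k <= n)%nat -> 0 < d -> d < 1 / INR n -> 1 - d < q -> q <= 1 ->
  xk' n k q <= exp 1 * xk' n k (1 - d).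
Proof.
  intros Hn Hkn Hd Hdn Hq Hqd. unfold xk'.
  destruct (Nat.eqb_spec k 0); [lra|].
  destruct (Nat.eqb_spec k n); [lra|].
  set (K := INR (n - 1) * C (n - 2) (k - 1)).
  assert (HK : 0 <= K) by (apply Rmult_le_pos; [apply pos_INR|apply C_nonneg]).
  replace (1 - (1 - d)) with d by ring.
  assert (Hd1 : d < 1).
  { assert (1 <= INR n) by (apply (le_INR 1); lia).
    assert (1 / INR n <= 1).
    { unfold Rdiv. rewrite Rmult_1_l. rewrite <- Rinv_1. apply Rinv_le_contravar; lra. }
    lra. }
  assert (Ha : (1 - q) ^ (k - 1) <= d ^ (k - 1)) by (apply pow_incr; lra).
  assert (Hqa : 0 <= (1 - q) ^ (k - 1)) by (apply pow_le; lra).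
  assert (Hb : q ^ (n - k - 1) <= 1).
  { apply Rle_trans with (1 ^ (n - k - 1)); [apply pow_incr; lra | rewrite pow1; lra]. }
  assert (Hb0 : 0 <= q ^ (n - k - 1)) by (apply pow_le; lra).
  assert (He := bnd_d n d (n - k - 1) Hn Hd Hdn ltac:(lia)).
  assert (0 <= K * q ^ (n - k - 1)) by (apply Rmult_le_pos; auto).
  assert (K * q ^ (n - k - 1) <= K) by (rewrite <- (Rmult_1_r K) at 2; apply Rmult_le_compat_l; auto).
  assert (K <= K * (exp 1 * (1 - d) ^ (n - k - 1))) by (rewrite <- (Rmult_1_r K) at 1; apply Rmult_le_compat_l; auto).
  assert (0 <= d ^ (k - 1)) by (apply pow_le; lra).
  assert (K * q ^ (n - k - 1) * (1 - q) ^ (k - 1) <= K * (exp 1 * (1 - d) ^ (n - k - 1)) * d ^ (k - 1)).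
  { apply Rmult_le_compat; auto. lra. }
  lra.
Qed.

Theorem mainTheorem7 (n : nat) (w : nat -> R) (delta : R)
  (hn : (1 <= n)%nat) (hw : valid_weights n w)
  (hd0 : 0 < delta) (hd1 : delta < 1 / INR n) :
  (forall q : R, 0 <= q -> q < delta -> alloc' n w q <= exp 1 * alloc' n w delta) /\
  (forall q : R, 1 - delta < q -> q <= 1 -> alloc' n w q <= exp 1 * alloc' n w (1 - delta)).
Proof.
  split; intros q H1 H2; unfold alloc'; rewrite scal_sum; apply sum_Rle; intros j Hj;
  assert (Hc := coef_nonneg n w j hw Hj hn).
  - assert (T := term1 n (S j) q delta hn ltac:(lia) hd0 hd1 H1 H2).
    nra.
  - assert (T := term2 n (S j) q delta hn ltac:(lia) hd0 hd1 H1 H2).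
    nra.
Qed.
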